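(* Let $E$ be an $mw$-complete Banach $f$-algebra. Then the following are equivalent: (1) $E$ is $mw$-continuous; (2) whenever $0\le x_\alpha\uparrow\le x$ holds in $E$, the net $(x_\alpha)$ is $mw$-Cauchy; (3) for every net $(x_\alpha)$ in $E$, $x_\alpha\downarrow0$ implies $x_\alpha\xrightarrow{mw}0$.
   Context: All vector lattices are real and Archimedean. An $f$-algebra is a vector lattice with an associative multiplication making it an algebra, such that products of positive elements are positive and $x\wedge y=0$ implies $(xz)\wedge y=(zx)\wedge y=0$ for all $z\ge0$. A Banach $f$-algebra is an $f$-algebra which is a Banach lattice with $\|xy\|\le\|x\|\|y\|$. A net $(x_\alpha)$ in $E$ $mw$-converges to $x$ ($x_\alpha\xrightarrow{mw}x$) if $|x_\alpha-x|u\to0$ weakly for every $u\in E_+$. A net $(x_\alpha)_{\alpha\in A}$ is $mw$-Cauchy if the net $(x_\alpha-x_{\alpha'})_{(\alpha,\alpha')\in A\times A}$ $mw$-converges to $0$; $E$ is $mw$-complete if every $mw$-Cauchy net in $E$ is $mw$-convergent. A net order converges to $x$ ($x_\alpha\xrightarrow{o}x$) if there is a net $y_\beta\downarrow0$ such that for every $\beta$ there is $\alpha_0$ with $|x_\alpha-x|\le y_\beta$ for $\alpha\ge\alpha_0$. $E$ is $mw$-continuous if $x_\alpha\xrightarrow{o}0$ implies $x_\alpha\xrightarrow{mw}0$. *)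

(* Defs.v *)
From HB Require Import structures.
From mathcomp Require Import all_boot all_order all_algebra.
From mathcomp Require Import all_classical all_reals all_analysis.
Set Implicit Arguments. Unset Strict Implicit. Unset Printing Implicit Defensive.
Import Order.TTheory GRing.Theory Num.Theory.
Import numFieldNormedType.Exports.
Local Open Scope ring_scope.

(* No unit is assumed. *)
Record BanachFAlgebra (R : realType) (E : completeNormedModType R) := {
  le : E -> E -> Prop;
  join : E -> E -> E;
  meet : E -> E -> E;
  mul : E -> E -> E;
  le_refl : forall x, le x x;
  le_trans : forall x y z, le x y -> le y z -> le x z;
  le_anti : forall x y, le x y -> le y x -> x = y;
  le_add : forall x y z, le x y -> le (x + z) (y + z);
  le_scale : forall (a : R) x, 0 <= a -> le 0 x -> le 0 (a *: x);
  join_ubl : forall x y, le x (join x y);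
  join_ubr : forall x y, le y (join x y);
  join_lub : forall x y z, le x z -> le y z -> le (join x y) z;
  meet_lbl : forall x y, le (meet x y) x;
  meet_lbr : forall x y, le (meet x y) y;
  meet_glb : forall x y z, le z x -> le z y -> le z (meet x y);
  archimedean : forall x y, le 0 x -> (forall n : nat, le (n%:R *: x) y) -> x = 0;
  norm_lattice : forall x y, le (join x (- x)) (join y (- y)) -> `|x| <= `|y|;
  mulA : forall x y z, mul x (mul y z) = mul (mul x y) z;
  mulDl : forall x y z, mul (x + y) z = mul x z + mul y z;
  mulDr : forall x y z, mul x (y + z) = mul x y + mul x z;
  mulZl : forall (a : R) x y, mul (a *: x) y = a *: mul x y;
  mulZr : forall (a : R) x y, mul x (a *: y) = a *: mul x y;
  mul_ge0 : forall x y, le 0 x -> le 0 y -> le 0 (mul x y);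
  f_prop : forall x y z, meet x y = 0 -> le 0 z ->
             meet (mul x z) y = 0 /\ meet (mul z x) y = 0;
  norm_mul : forall x y, `|mul x y| <= `|x| * `|y|
}.
Arguments BanachFAlgebra : clear implicits.

Section Defs.
Context {R : realType} {E : completeNormedModType R} (F : BanachFAlgebra R E).

Definition absE (x : E) : E := join F x (- x).

Definition directed (A : Type) (r : A -> A -> Prop) : Prop :=
  inhabited A /\ (forall a, r a a) /\ (forall a b c, r a b -> r b c -> r a c) /\
  (forall a b, exists c, r a c /\ r b c).

Definition dual_elt (f : E -> R) : Prop :=
  (forall (a : R) x y, f (a *: x + y) = a * f x + f y) /\ continuous f.

Definition weak_cvg (A : Type) (r : A -> A -> Prop) (x : A -> E) (l : E) : Prop :=
  forall f, dual_elt f -> forall eps : R, 0 < eps ->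
    exists a0, forall a, r a0 a -> `|f (x a) - f l| < eps.

Definition mw_cvg (A : Type) (r : A -> A -> Prop) (x : A -> E) (l : E) : Prop :=
  forall u, le F 0 u -> weak_cvg r (fun a => mul F (absE (x a - l)) u) 0.

Definition prod_rel (A : Type) (r : A -> A -> Prop) : A * A -> A * A -> Prop :=
  fun p q => r p.1 q.1 /\ r p.2 q.2.

Definition mw_cauchy (A : Type) (r : A -> A -> Prop) (x : A -> E) : Prop :=
  mw_cvg (prod_rel r) (fun p => x p.1 - x p.2) 0.

Definition mw_complete : Prop :=
  forall (A : Type) (r : A -> A -> Prop), directed r ->
    forall x : A -> E, mw_cauchy r x -> exists l, mw_cvg r x l.

Definition increasing (A : Type) (r : A -> A -> Prop) (x : A -> E) : Prop :=
  forall a b, r a b -> le F (x a) (x b).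

Definition decr_to0 (A : Type) (r : A -> A -> Prop) (x : A -> E) : Prop :=
  (forall a b, r a b -> le F (x b) (x a)) /\
  (forall a, le F 0 (x a)) /\
  (forall z, (forall a, le F z (x a)) -> le F z 0).

Definition o_cvg (A : Type) (r : A -> A -> Prop) (x : A -> E) (l : E) : Prop :=
  exists (B : Type) (s : B -> B -> Prop) (y : B -> E),
    directed s /\ decr_to0 s y /\
    forall b, exists a0, forall a, r a0 a -> le F (absE (x a - l)) (y b).

Definition mw_continuous : Prop :=
  forall (A : Type) (r : A -> A -> Prop), directed r ->
    forall x : A -> E, o_cvg r x 0 -> mw_cvg r x 0.

Definition incr_bdd_mw_cauchy : Prop :=
  forall (A : Type) (r : A -> A -> Prop), directed r ->
    forall (x : A -> E) (xs : E),
      (forall a, le F 0 (x a)) -> increasing r x -> (forall a, le F (x a) xs) ->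
      mw_cauchy r x.

Definition decr_mw_cvg0 : Prop :=
  forall (A : Type) (r : A -> A -> Prop), directed r ->
    forall x : A -> E, decr_to0 r x -> mw_cvg r x 0.

End Defs.

(* Main.v *)
Require Import Defs.
From HB Require Import structures.
From mathcomp Require Import all_boot all_order all_algebra.
From mathcomp Require Import all_classical all_reals all_analysis.
From mathcomp Require Import ring lra.
Set Implicit Arguments. Unset Strict Implicit. Unset Printing Implicit Defensive.
Import Order.TTheory GRing.Theory Num.Theory.
Import numFieldNormedType.Exports.
Local Open Scope ring_scope.
Section Lat.
Variables (R : realType) (E : completeNormedModType R) (F : BanachFAlgebra R E).
Local Notation "x ⊑ y" := (Defs.le F x y) (at level 70).
Local Notation jn := (Defs.join F).
Local Notation mt := (Defs.meet F).
Local Notation mul := (Defs.mul F).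

Lemma lrefl x : x ⊑ x. Proof. exact: Defs.le_refl. Qed.
Lemma ltr x y z : x ⊑ y -> y ⊑ z -> x ⊑ z. Proof. exact: Defs.le_trans. Qed.
Lemma lanti x y : x ⊑ y -> y ⊑ x -> x = y. Proof. exact: Defs.le_anti. Qed.

Lemma ladd x y z : x ⊑ y -> x + z ⊑ y + z. Proof. exact: Defs.le_add. Qed.
Lemma laddl x y z : x ⊑ y -> z + x ⊑ z + y.
Proof. by move=> h; rewrite ![z + _]addrC; apply: ladd. Qed.
Lemma ladd2 x y z w : x ⊑ y -> z ⊑ w -> x + z ⊑ y + w.
Proof. move=> h1 h2; apply: (ltr (ladd z h1)); exact: laddl. Qed.
Lemma lsub0 x y : x ⊑ y -> 0 ⊑ y - x.
Proof. by move=> h; have := ladd (-x) h; rewrite subrr. Qed.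
Lemma lsub0' x y : 0 ⊑ y - x -> x ⊑ y.
Proof. by move=> h; have := ladd x h; rewrite add0r subrK. Qed.
Lemma lopp x y : x ⊑ y -> -y ⊑ -x.
Proof.
move=> h; have := ladd (-x - y) h.
by rewrite addrA subrr add0r addrCA subrr addr0.
Qed.
Lemma lopp' x y : -y ⊑ -x -> x ⊑ y.
Proof. by move=> /lopp; rewrite !opprK. Qed.
Lemma lpos_add x y : 0 ⊑ x -> 0 ⊑ y -> 0 ⊑ x + y.
Proof. by move=> h1 h2; have := ladd2 h1 h2; rewrite addr0. Qed.
Lemma lscale (t : R) x y : 0 <= t -> x ⊑ y -> t *: x ⊑ t *: y.
Proof.
move=> t0 /lsub0 h; apply: lsub0'; rewrite -scalerBr; exact: Defs.le_scale.
Qed.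
Lemma lscale0 (t : R) x : 0 <= t -> 0 ⊑ x -> 0 ⊑ t *: x.
Proof. exact: Defs.le_scale. Qed.
Lemma lscale_le (s t : R) x : s <= t -> 0 ⊑ x -> s *: x ⊑ t *: x.
Proof.
move=> st x0; apply: lsub0'; rewrite -scalerBl; apply: Defs.le_scale => //.
by rewrite subr_ge0.
Qed.
Lemma lopp_le0 x : 0 ⊑ x -> -x ⊑ 0.
Proof. by move=> /lopp; rewrite oppr0. Qed.

Lemma jubl x y : x ⊑ jn x y. Proof. exact: Defs.join_ubl. Qed.
Lemma jubr x y : y ⊑ jn x y. Proof. exact: Defs.join_ubr. Qed.
Lemma jlub x y z : x ⊑ z -> y ⊑ z -> jn x y ⊑ z. Proof. exact: Defs.join_lub. Qed.
Lemma mlbl x y : mt x y ⊑ x. Proof. exact: Defs.meet_lbl. Qed.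
Lemma mlbr x y : mt x y ⊑ y. Proof. exact: Defs.meet_lbr. Qed.
Lemma mglb x y z : z ⊑ x -> z ⊑ y -> z ⊑ mt x y. Proof. exact: Defs.meet_glb. Qed.

Ltac lat := first [exact: jubl|exact: jubr|exact: mlbl|exact: mlbr|exact: lrefl].

Lemma joinC x y : jn x y = jn y x.
Proof. by apply: lanti; apply: jlub; lat. Qed.
Lemma meetC x y : mt x y = mt y x.
Proof. by apply: lanti; apply: mglb; lat. Qed.
Lemma join_r x y : x ⊑ y -> jn x y = y.
Proof. move=> h; apply: lanti; last exact: jubr. by apply: jlub => //; apply: lrefl. Qed.
Lemma join_l x y : y ⊑ x -> jn x y = x.
Proof. by move=> h; rewrite joinC join_r. Qed.
Lemma meet_l x y : x ⊑ y -> mt x y = x.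
Proof. move=> h; apply: lanti; first exact: mlbl. by apply: mglb => //; apply: lrefl. Qed.
Lemma meet_r x y : y ⊑ x -> mt x y = y.
Proof. by move=> h; rewrite meetC meet_l. Qed.
Lemma join_mono x x' y y' : x ⊑ x' -> y ⊑ y' -> jn x y ⊑ jn x' y'.
Proof. move=> h1 h2; apply: jlub; [exact: ltr h1 (jubl _ _)|exact: ltr h2 (jubr _ _)]. Qed.
Lemma meet_mono x x' y y' : x ⊑ x' -> y ⊑ y' -> mt x y ⊑ mt x' y'.
Proof. move=> h1 h2; apply: mglb; [exact: ltr (mlbl _ _) h1|exact: ltr (mlbr _ _) h2]. Qed.

Lemma join_add x y z : jn x y + z = jn (x + z) (y + z).
Proof.
apply: lanti; last by apply: jlub; apply: ladd; lat.
have h : jn x y ⊑ jn (x + z) (y + z) - z.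
  apply: jlub.
    by apply: ltr (ladd (-z) (jubl (x + z) (y + z))); rewrite addrK; apply: lrefl.
  by apply: ltr (ladd (-z) (jubr (x + z) (y + z))); rewrite addrK; apply: lrefl.
by have := ladd z h; rewrite subrK.
Qed.
Lemma meet_add x y z : mt x y + z = mt (x + z) (y + z).
Proof.
apply: lanti; first by apply: mglb; apply: ladd; lat.
have h : mt (x + z) (y + z) - z ⊑ mt x y.
  apply: mglb.
    by apply: ltr (ladd (-z) (mlbl (x + z) (y + z))) _; rewrite addrK; apply: lrefl.
  by apply: ltr (ladd (-z) (mlbr (x + z) (y + z))) _; rewrite addrK; apply: lrefl.
by have := ladd z h; rewrite subrK.
Qed.
Lemma meet_opp x y : mt x y = - jn (-x) (-y).
Proof.
apply: lanti.
  apply: lopp'; rewrite opprK; apply: jlub; apply: lopp; by lat.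
apply: mglb; apply: lopp'; rewrite opprK; by lat.
Qed.
Lemma join_opp x y : jn x y = - mt (-x) (-y).
Proof. by rewrite meet_opp !opprK. Qed.

Lemma join_scale (t : R) x y : 0 <= t -> jn (t *: x) (t *: y) = t *: jn x y.
Proof.
rewrite le_eqVlt => /orP[/eqP <-|t0].
  by rewrite !scale0r join_r //; apply: lrefl.
have t0' : 0 <= t by exact: ltW.
have ti : 0 <= t^-1 by rewrite invr_ge0.
apply: lanti; first by apply: jlub; apply: lscale => //; lat.
have h : jn x y ⊑ t^-1 *: jn (t *: x) (t *: y).
  apply: jlub.
    by rewrite -{1}[x](scalerK (lt0r_neq0 t0)); apply: lscale => //; lat.
  by rewrite -{1}[y](scalerK (lt0r_neq0 t0)); apply: lscale => //; lat.
have := lscale t0' h; by rewrite scalerA divff ?lt0r_neq0 // scale1r.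
Qed.
Lemma meet_scale (t : R) x y : 0 <= t -> mt (t *: x) (t *: y) = t *: mt x y.
Proof. by move=> t0; rewrite !meet_opp -!scalerN join_scale // scalerN. Qed.

Definition posE x := jn x 0.
Definition negE x := jn (-x) 0.

Lemma pos_ge0 x : 0 ⊑ posE x. Proof. exact: jubr. Qed.
Lemma neg_ge0 x : 0 ⊑ negE x. Proof. exact: jubr. Qed.
Lemma pos_ge x : x ⊑ posE x. Proof. exact: jubl. Qed.
Lemma pos_id x : 0 ⊑ x -> posE x = x. Proof. by move=> h; rewrite /posE join_l. Qed.
Lemma pos_neg x : posE x - negE x = x.
Proof.
have -> : negE x = posE x - x.
  by rewrite /posE join_add add0r subrr joinC.
by rewrite opprB addrC subrK.
Qed.
Lemma neg_pos x : negE x = posE (-x). Proof. by []. Qed.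

Lemma abs_ge0 x : 0 ⊑ absE F x.
Proof.
have h : 0 ⊑ 2%:R *: absE F x.
  rewrite scaler_nat mulr2n -(subrr x); apply: ladd2; lat.
have hi : 0 <= (2%:R : R)^-1 by rewrite invr_ge0 ler0n.
have := lscale hi h.
by rewrite scaler0 scalerA mulVf ?pnatr_eq0 // scale1r.
Qed.
Lemma abs_id x : 0 ⊑ x -> absE F x = x.
Proof. by move=> h; rewrite /absE join_l //; apply: ltr (lopp_le0 h) h. Qed.
Lemma absN x : absE F (-x) = absE F x.
Proof. by rewrite /absE opprK joinC. Qed.
Lemma abs_ge x : x ⊑ absE F x. Proof. exact: jubl. Qed.
Lemma abs_geN x : -x ⊑ absE F x. Proof. exact: jubr. Qed.
Lemma pos_le_abs x : posE x ⊑ absE F x.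
Proof. apply: jlub; [exact: abs_ge|exact: abs_ge0]. Qed.
Lemma neg_le_abs x : negE x ⊑ absE F x.
Proof. apply: jlub; [exact: abs_geN|exact: abs_ge0]. Qed.
Lemma abs_pos_neg x : absE F x = posE x + negE x.
Proof.
have e1 : posE x + negE x = jn (x + negE x) (negE x) by rewrite /posE join_add add0r.
have e2 : x + negE x = jn 0 x by rewrite addrC /negE join_add addNr add0r.
rewrite e1 e2; apply: lanti.
  apply: jlub; first exact: ltr (jubr 0 x) (jubl _ _).
  exact: ltr (jubl (-x) 0) (jubr _ _).
apply: jlub; first by apply: jlub; [exact: abs_ge0|exact: abs_ge].
exact: neg_le_abs.
Qed.
End Lat.
Section Lat2.
Variables (R : realType) (E : completeNormedModType R) (F : BanachFAlgebra R E).
Local Notation "x ⊑ y" := (Defs.le F x y) (at level 70).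
Local Notation jn := (Defs.join F).
Local Notation mt := (Defs.meet F).
Local Notation mul := (Defs.mul F).
Local Notation pos := (posE F).
Local Notation neg := (negE F).
Ltac lat := first [exact: jubl|exact: jubr|exact: mlbl|exact: mlbr|exact: lrefl].

Lemma norm_mono (x y : E) : 0 ⊑ x -> x ⊑ y -> `|x| <= `|y|.
Proof.
move=> x0 xy; apply: (@Defs.norm_lattice _ _ F).
change (absE F x ⊑ absE F y); rewrite !abs_id //; exact: ltr x0 xy.
Qed.
Lemma norm_absE (x : E) : `|absE F x| = `|x|.
Proof.
apply/eqP; rewrite eq_le; apply/andP; split; apply: (@Defs.norm_lattice _ _ F).
  change (absE F (absE F x) ⊑ absE F x); rewrite abs_id; [exact: lrefl|exact: abs_ge0].
change (absE F x ⊑ absE F (absE F x)); rewrite (abs_id (abs_ge0 F x)); exact: lrefl.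
Qed.
Lemma norm_pos_le (x : E) : `|pos x| <= `|x|.
Proof. by have := norm_mono (pos_ge0 F x) (pos_le_abs F x); rewrite norm_absE. Qed.
Lemma norm_neg_le (x : E) : `|neg x| <= `|x|.
Proof. by have := norm_mono (neg_ge0 F x) (neg_le_abs F x); rewrite norm_absE. Qed.
Lemma pos_scale (t : R) x : 0 <= t -> pos (t *: x) = t *: pos x.
Proof. by move=> t0; rewrite /posE -join_scale // scaler0. Qed.
Lemma pos_mono x y : x ⊑ y -> pos x ⊑ pos y.
Proof. by move=> h; apply: join_mono => //; exact: lrefl. Qed.
Lemma pos_add_le x y : pos (x + y) ⊑ pos x + pos y.
Proof.
apply: jlub; first by apply: ladd2; exact: pos_ge.
by apply: lpos_add; exact: pos_ge0.
Qed.
Lemma meet_ge0 a b : 0 ⊑ a -> 0 ⊑ b -> 0 ⊑ mt a b.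
Proof. exact: mglb. Qed.
Lemma meet_le_add w p k : 0 ⊑ k -> mt w (p + k) ⊑ mt w p + k.
Proof.
move=> k0; rewrite meet_add; apply: meet_mono; last exact: lrefl.
by have := laddl w k0; rewrite addr0.
Qed.
Lemma disj_scale a b (t : R) : 0 ⊑ a -> 0 ⊑ b -> mt a b = 0 -> 0 <= t ->
  mt a (t *: b) = 0.
Proof.
move=> a0 b0 ab t0; apply: lanti; last first.
  by apply: meet_ge0 => //; exact: lscale0.
have [t1|t1] := lerP t 1.
  rewrite -ab; apply: meet_mono; first exact: lrefl.
  by have := lscale_le t1 b0; rewrite scale1r.
rewrite -(scaler0 _ t) -ab -meet_scale //; apply: meet_mono; last exact: lrefl.
by have := lscale_le (ltW t1) a0; rewrite scale1r.
Qed.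

Lemma mulE0l x : mul 0 x = 0.
Proof. by have := @Defs.mulZl _ _ F 0 0 x; rewrite !scale0r. Qed.
Lemma mulE0r x : mul x 0 = 0.
Proof. by have := @Defs.mulZr _ _ F 0 x 0; rewrite !scale0r. Qed.
Lemma mulENl x y : mul (-x) y = - mul x y.
Proof. by rewrite -scaleN1r Defs.mulZl scaleN1r. Qed.
Lemma mulBl x y z : mul (x - y) z = mul x z - mul y z.
Proof. by rewrite Defs.mulDl mulENl. Qed.
Lemma mul_ge0' x y : 0 ⊑ x -> 0 ⊑ y -> 0 ⊑ mul x y.
Proof. exact: Defs.mul_ge0. Qed.
Lemma mul_mono x y u : x ⊑ y -> 0 ⊑ u -> mul x u ⊑ mul y u.
Proof.
move=> /lsub0 h u0; apply: lsub0'; rewrite -mulBl; exact: mul_ge0'.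
Qed.
Lemma mulZl' (a : R) x y : mul (a *: x) y = a *: mul x y.
Proof. exact: Defs.mulZl. Qed.
End Lat2.

Section Dual.
Variables (R : realType) (E : completeNormedModType R).

Lemma dual0 (f : E -> R) : dual_elt f -> f 0 = 0.
Proof.
move=> [lin _]; have := lin 1 0 0; rewrite scale1r addr0 mul1r.
by move=> h; lra.
Qed.
Lemma dualD (f : E -> R) x y : dual_elt f -> f (x + y) = f x + f y.
Proof. by move=> [lin _]; have := lin 1 x y; rewrite scale1r mul1r. Qed.
Lemma dualZ (f : E -> R) a x : dual_elt f -> f (a *: x) = a * f x.
Proof.
move=> hf; have := hf.1 a x 0; rewrite addr0 => ->; by rewrite dual0 // addr0.
Qed.
Lemma dualN (f : E -> R) x : dual_elt f -> f (- x) = - f x.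
Proof. by move=> hf; rewrite -scaleN1r dualZ // mulN1r. Qed.
Lemma dualB (f : E -> R) x y : dual_elt f -> f (x - y) = f x - f y.
Proof. by move=> hf; rewrite dualD // dualN. Qed.

Lemma lin_bdd_cont (g : E -> R) (C : R) :
  (forall (a : R) x y, g (a *: x + y) = a * g x + g y) ->
  (forall x, `|g x| <= C * `|x|) -> continuous g.
Proof.
move=> lin bd x; apply/cvgrPdist_lt => e e0.
have gD u v : g (u + v) = g u + g v by have := lin 1 u v; rewrite scale1r mul1r.
have g0 : g 0 = 0.
  by have := gD 0 0; rewrite addr0 => h; lra.
have gN u : g (- u) = - g u.
  by have := lin (-1) u 0; rewrite addr0 g0 addr0 scaleN1r mulN1r.
pose K := `|C| + 1.
have K0 : 0 < K by rewrite /K ltr_wpDl.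
have bdK u : `|g u| <= K * `|u|.
  apply: le_trans (bd u) _; apply: ler_wpM2r => //.
  by rewrite /K (le_trans (ler_norm C)) // lerDl.
apply/nbhs_normP; exists (e / K); first by rewrite /= divr_gt0.
move=> t /= ht.
have -> : g x - g t = g (x - t) by rewrite gD gN.
apply: le_lt_trans (bdK _) _.
by rewrite -ltr_pdivlMl // mulrC.
Qed.
End Dual.
Section Dual2.
Variables (R : realType) (E : completeNormedModType R).
Lemma dual_bdd (f : E -> R) : dual_elt f -> exists C, forall x, `|f x| <= C * `|x|.
Proof.
move=> hf; have := hf.2 0; move/cvgrPdist_lt => /(_ 1 ltr01) /nbhs_normP [d /= d0 hd].
exists (2 / d) => x.
case: (eqVneq x 0) => [->|xn0]; first by rewrite dual0 // !normr0 mulr0.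
have nx : 0 < `|x| by rewrite normr_gt0.
set c := d / 2 / `|x|.
have c0 : 0 < c by rewrite /c !divr_gt0.
have : ball_ Num.Def.normr 0 d (c *: x).
  rewrite /ball_ /= sub0r normrN normrZ gtr0_norm // /c.
  have -> : d / 2 / `|x| * `|x| = d / 2 by field; rewrite gt_eqF.
  by rewrite ltr_pdivrMr // ltr_pMr // ltr1n.
move/hd; rewrite dual0 // sub0r normrN dualZ // normrM gtr0_norm // => h.
rewrite -(ler_pM2l c0).
have -> : c * (2 / d * `|x|) = 1 by rewrite /c; field; rewrite !gt_eqF.
exact: ltW.
Qed.
End Dual2.
Section SupHelp.
Variable (R : realType) (T : Type).
Local Open Scope classical_set_scope.
Lemma sup_img_ge (D : set T) (g : T -> R) (M : R) w :
  (forall w, D w -> g w <= M) -> D w -> g w <= sup (g @` D).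
Proof.
move=> hM Dw; apply: ub_le_sup; last by exists w.
by exists M => _ [v Dv <-]; exact: hM.
Qed.
Lemma sup_img_le (D : set T) (g : T -> R) (c : R) :
  (exists w, D w) -> (forall w, D w -> g w <= c) -> sup (g @` D) <= c.
Proof.
move=> [w Dw] hc; apply: ge_sup; first by exists (g w), w.
by move=> _ [v Dv <-]; exact: hc.
Qed.
Lemma inf_img_le (D : set T) (g : T -> R) (M : R) w :
  (forall w, D w -> M <= g w) -> D w -> inf (g @` D) <= g w.
Proof.
move=> hM Dw; apply: ge_inf; last by exists w.
by exists M => _ [v Dv <-]; exact: hM.
Qed.
Lemma inf_img_ge (D : set T) (g : T -> R) (c : R) :
  (exists w, D w) -> (forall w, D w -> c <= g w) -> c <= inf (g @` D).
Proof.
move=> [w Dw] hc; apply: lb_le_inf; first by exists (g w), w.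
by move=> _ [v Dv <-]; exact: hc.
Qed.
End SupHelp.

Section RK.
Variables (R : realType) (E : completeNormedModType R) (F : BanachFAlgebra R E).
Local Notation "x ⊑ y" := (Defs.le F x y) (at level 70).
Local Notation jn := (Defs.join F).
Local Notation mt := (Defs.meet F).
Local Notation pos := (posE F).
Local Notation neg := (negE F).
Local Open Scope classical_set_scope.
Ltac lat := first [exact: jubl|exact: jubr|exact: mlbl|exact: mlbr|exact: lrefl].

Lemma dual_bdd' (f : E -> R) : dual_elt f ->
  exists C, 0 <= C /\ forall x, `|f x| <= C * `|x|.
Proof.
move=> /dual_bdd [C hC]; exists `|C|; split => // x.
by apply: le_trans (hC x) _; apply: ler_wpM2r => //; exact: ler_norm.
Qed.

Variable f : E -> R.
Hypothesis hf : dual_elt f.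

Definition RKP (x : E) : R := sup (f @` [set w | 0 ⊑ w /\ w ⊑ x]).

Lemma RK_ge x w : 0 ⊑ w -> w ⊑ x -> f w <= RKP x.
Proof.
move=> w0 wx; have [C [C0 hC]] := dual_bdd' hf.
apply: (@sup_img_ge _ _ _ _ (C * `|x|)) => // v [v0 vx].
apply: le_trans (ler_norm _) _; apply: le_trans (hC v) _.
by apply: ler_wpM2l => //; exact: norm_mono v0 vx.
Qed.
Lemma RK_le x c : 0 ⊑ x -> (forall w, 0 ⊑ w -> w ⊑ x -> f w <= c) -> RKP x <= c.
Proof.
move=> x0 h; apply: sup_img_le; first by exists 0; split => //; exact: lrefl.
by move=> w [w0 wx]; exact: h.
Qed.
Lemma RK_ge0 x : 0 ⊑ x -> 0 <= RKP x.
Proof. by move=> x0; rewrite -(dual0 hf); apply: RK_ge => //; exact: lrefl. Qed.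
Lemma RK_bd : exists C, 0 <= C /\ forall x, 0 ⊑ x -> RKP x <= C * `|x|.
Proof.
have [C [C0 hC]] := dual_bdd' hf; exists C; split => // x x0; apply: RK_le => // w w0 wx.
apply: le_trans (ler_norm _) _; apply: le_trans (hC w) _.
by apply: ler_wpM2l => //; exact: norm_mono w0 wx.
Qed.
Lemma RK0 : RKP 0 = 0.
Proof.
apply/eqP; rewrite eq_le RK_ge0 ?andbT; last exact: lrefl.
apply: RK_le; first exact: lrefl.
by move=> w w0 w0'; rewrite (lanti w0' w0) dual0.
Qed.
Lemma RK_add x y : 0 ⊑ x -> 0 ⊑ y -> RKP (x + y) = RKP x + RKP y.
Proof.
move=> x0 y0; have xy0 := lpos_add x0 y0.
apply/eqP; rewrite eq_le; apply/andP; split.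
  apply: RK_le => // w w0 wxy.
  have e : w = mt w x + (w - mt w x) by rewrite addrC subrK.
  rewrite e dualD //; apply: lerD.
    by apply: RK_ge; [exact: meet_ge0|lat].
  apply: RK_ge; first by apply: lsub0; lat.
  have h : w ⊑ mt w x + y.
    rewrite meet_add; apply: mglb => //.
    by have := laddl w y0; rewrite addr0.
  by have := ladd (- mt w x) h; rewrite [mt w x + y]addrC addrK.
rewrite -lerBrDr; apply: RK_le => // w w0 wx.
rewrite lerBrDr addrC -lerBrDr; apply: RK_le => // v v0 vy.
rewrite lerBrDr -dualD //; apply: RK_ge; first exact: lpos_add v0 w0.
by rewrite addrC; exact: ladd2 wx vy.
Qed.
Lemma RK_scale (t : R) x : 0 <= t -> 0 ⊑ x -> RKP (t *: x) = t * RKP x.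
Proof.
rewrite le_eqVlt => /orP[/eqP <-|t0] x0; first by rewrite scale0r RK0 mul0r.
have ti : 0 <= t^-1 by rewrite invr_ge0 ltW.
have tx0 : 0 ⊑ t *: x by apply: lscale0 => //; exact: ltW.
apply/eqP; rewrite eq_le; apply/andP; split.
  apply: RK_le => // w w0 wx.
  rewrite -ler_pdivrMl //.
  have -> : t^-1 * f w = f (t^-1 *: w) by rewrite dualZ.
  apply: RK_ge; first exact: lscale0.
  by have := lscale ti wx; rewrite scalerA mulVf ?gt_eqF // scale1r.
rewrite -ler_pdivlMl //; apply: RK_le => // w w0 wx.
rewrite ler_pdivlMl // -dualZ //; apply: RK_ge.
  by apply: lscale0 => //; exact: ltW.
by apply: lscale => //; exact: ltW.
Qed.

Definition RKG (x : E) : R := RKP (pos x) - RKP (neg x).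

Lemma RKG_repr a b : 0 ⊑ a -> 0 ⊑ b -> RKG (a - b) = RKP a - RKP b.
Proof.
move=> a0 b0; rewrite /RKG.
have e : pos (a - b) + b = a + neg (a - b).
  have h := pos_neg F (a - b).
  have -> : pos (a - b) = a - b + neg (a - b) by apply/eqP; rewrite -subr_eq h.
  by rewrite addrAC subrK.
have := congr1 RKP e; rewrite !RK_add //; try exact: pos_ge0; try exact: neg_ge0.
move=> h; apply/eqP; rewrite subr_eq addrAC -h addrK //.
Qed.
Lemma RKG_pos x : 0 ⊑ x -> RKG x = RKP x.
Proof. by move=> x0; rewrite -[x]subr0 RKG_repr ?RK0 ?subr0 //; exact: lrefl. Qed.
Lemma RKG_lin0 (a : R) x y : 0 <= a -> RKG (a *: x + y) = a * RKG x + RKG y.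
Proof.
move=> a0; have p0 := pos_ge0 F; have n0 := neg_ge0 F.
have e : a *: x + y = (a *: pos x + pos y) - (a *: neg x + neg y).
  by rewrite -{1}(pos_neg F x) -{1}(pos_neg F y) scalerBr; rewrite addrACA opprD addrA.
rewrite e RKG_repr; try (apply: lpos_add => //; exact: lscale0).
rewrite !RK_add //; try exact: lscale0.
by rewrite !RK_scale // /RKG; ring.
Qed.
Lemma RKG_N x : RKG (- x) = - RKG x.
Proof. by rewrite /RKG /negE opprK /posE opprB. Qed.
Lemma RKG_lin (a : R) x y : RKG (a *: x + y) = a * RKG x + RKG y.
Proof.
have [a0|a0] := leP 0 a; first exact: RKG_lin0.
have -> : a *: x = (- a) *: (- x) by rewrite scaleNr scalerN opprK.
by rewrite RKG_lin0 ?RKG_N ?mulrNN // oppr_ge0 ltW.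
Qed.
Lemma RKG_bd : exists C, forall x, `|RKG x| <= C * `|x|.
Proof.
have [C [C0 hC]] := RK_bd; exists (C + C) => x.
rewrite /RKG; apply: le_trans (ler_normB _ _) _.
rewrite !ger0_norm; try (apply: RK_ge0; first [exact: pos_ge0|exact: neg_ge0]).
rewrite mulrDl; apply: lerD.
  apply: le_trans (hC _ (pos_ge0 F x)) _.
  by apply: ler_wpM2l => //; exact: norm_pos_le.
apply: le_trans (hC _ (neg_ge0 F x)) _.
by apply: ler_wpM2l => //; exact: norm_neg_le.
Qed.
Lemma RKG_dual : dual_elt RKG.
Proof.
split; first exact: RKG_lin.
have [C hC] := RKG_bd; exact: (lin_bdd_cont RKG_lin hC).
Qed.
Lemma RKG_ge0 x : 0 ⊑ x -> 0 <= RKG x.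
Proof. by move=> x0; rewrite RKG_pos //; exact: RK_ge0. Qed.
Lemma RKG_ge_f x : 0 ⊑ x -> f x <= RKG x.
Proof. by move=> x0; rewrite RKG_pos //; apply: RK_ge => //; exact: lrefl. Qed.
End RK.
Section Dom.
Variables (R : realType) (E : completeNormedModType R) (F : BanachFAlgebra R E).
Local Notation "x ⊑ y" := (Defs.le F x y) (at level 70).
Local Notation pos := (posE F).
Local Notation neg := (negE F).

Definition posdual (G : E -> R) := dual_elt G /\ forall x, 0 ⊑ x -> 0 <= G x.

Lemma dual_opp (f : E -> R) : dual_elt f -> dual_elt (fun x => - f x).
Proof.
move=> hf; have lin : forall (a : R) x y, - f (a *: x + y) = a * - f x + - f y.
  by move=> a x y; rewrite hf.1 opprD mulrN.
split => //; have [C hC] := dual_bdd hf.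
by apply: (lin_bdd_cont lin (C := C)) => x; rewrite normrN.
Qed.
Lemma dual_add (f g : E -> R) : dual_elt f -> dual_elt g -> dual_elt (fun x => f x + g x).
Proof.
move=> hf hg; have lin : forall (a : R) x y, f (a *: x + y) + g (a *: x + y) = a * (f x + g x) + (f y + g y).
  by move=> a x y; rewrite hf.1 hg.1; ring.
split => //; have [C hC] := dual_bdd hf; have [D hD] := dual_bdd hg.
apply: (lin_bdd_cont lin (C := C + D)) => x.
by apply: le_trans (ler_normD _ _) _; rewrite mulrDl lerD.
Qed.

Lemma dominate (f : E -> R) : dual_elt f ->
  exists G, posdual G /\ forall v, `|f v| <= G (absE F v).
Proof.
move=> hf; have hf' := dual_opp hf.
pose G := fun x => RKG F f x + RKG F (fun y => - f y) x.
have hG : posdual G.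
  split; first by apply: dual_add; exact: RKG_dual.
  by move=> x x0; rewrite addr_ge0 // RKG_ge0.
have hz : forall z, 0 ⊑ z -> `|f z| <= G z.
  move=> z z0; rewrite ler_norml; apply/andP; split.
    rewrite lerNl; apply: le_trans (RKG_ge_f hf' z0) _.
    by rewrite /G lerDr RKG_ge0.
  by apply: le_trans (RKG_ge_f hf z0) _; rewrite /G lerDl RKG_ge0.
exists G; split => // v.
rewrite -{1}(pos_neg F v) dualB // abs_pos_neg dualD //; last exact: hG.1.
apply: le_trans (ler_normB _ _) _; apply: lerD; apply: hz.
  exact: pos_ge0.
exact: neg_ge0.
Qed.

Lemma weak0 (A : Type) (r : A -> A -> Prop) (z : A -> E) :
  (forall G, posdual G -> forall eps : R, 0 < eps ->
     exists a0, forall a, r a0 a -> G (absE F (z a)) < eps) ->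
  weak_cvg r z 0.
Proof.
move=> h f hf eps e0; have [G [hG hfG]] := dominate hf.
have [a0 ha0] := h G hG eps e0; exists a0 => a ra.
rewrite dual0 // subr0; exact: le_lt_trans (hfG _) (ha0 a ra).
Qed.

Lemma weak0_inv (A : Type) (r : A -> A -> Prop) (z : A -> E) G (eps : R) :
  weak_cvg r z 0 -> posdual G -> 0 < eps ->
  exists a0, forall a, r a0 a -> G (z a) < eps.
Proof.
move=> hw [hG _] e0; have [a0 ha0] := hw G hG eps e0; exists a0 => a ra.
have := ha0 a ra; rewrite dual0 // subr0; exact: le_lt_trans (ler_norm _).
Qed.
End Dom.
Section HBsec.
Variables (R : realType) (E : completeNormedModType R) (F : BanachFAlgebra R E).
Local Notation "x ⊑ y" := (Defs.le F x y) (at level 70).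
Local Notation pos := (posE F).
Local Open Scope classical_set_scope.

Definition sublin (q : E -> R) :=
  (forall x y, q (x + y) <= q x + q y) /\ (forall (t : R) x, 0 <= t -> q (t *: x) = t * q x).

Lemma sublin0 q : sublin q -> q 0 = 0.
Proof. by move=> [_ hs]; have := hs 0 0 (lexx _); rewrite scale0r mul0r. Qed.
Lemma sublin_lb q x : sublin q -> - q (- x) <= q x.
Proof.
move=> hq; have := hq.1 x (-x); rewrite subrr sublin0 // => h; lra.
Qed.

Section Shift.
Variables (q : E -> R) (z : E).
Hypothesis hq : sublin q.
Definition shexp x t := q (x + t *: z) - t * q z.
Definition shift x := inf (shexp x @` [set t | 0 <= t]).

Lemma sh_lb x t : 0 <= t -> - q (- x) <= shexp x t.
Proof.
move=> t0; rewrite /shexp lerBrDr -(hq.2 t z t0) addrC.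
have := hq.1 (x + t *: z) (-x); rewrite addrAC subrr add0r => h.
lra.
Qed.
Lemma sh_le x t : 0 <= t -> shift x <= shexp x t.
Proof.
move=> t0; apply: (@inf_img_le _ _ [set t | 0 <= t] (shexp x) (- q (- x)) t) => //.
by move=> s s0; exact: sh_lb s0.
Qed.
Lemma sh_ge x c : (forall t, 0 <= t -> c <= shexp x t) -> c <= shift x.
Proof. move=> h; rewrite /shift; apply: inf_img_ge; [exists 0; exact: lexx|exact: h]. Qed.
Lemma sh_le_q x : shift x <= q x.
Proof. by have := sh_le x (lexx 0); rewrite /shexp scale0r addr0 mul0r subr0. Qed.
Lemma sh_one x : shift x <= q (x + z) - q z.
Proof. by have := sh_le x ler01; rewrite /shexp scale1r mul1r. Qed.
Lemma sh_sublin : sublin shift.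
Proof.
split.
  have sw : forall a b c : R, a - c <= b -> a - b <= c by move=> a b c h; lra.
  move=> x y; rewrite -lerBlDr; apply: sh_ge => t1 t10.
  apply: sw; apply: sh_ge => t2 t20.
  rewrite lerBlDr; apply: le_trans (sh_le (x + y) (addr_ge0 t10 t20)) _.
  rewrite /shexp scalerDl.
  have -> : x + y + (t1 *: z + t2 *: z) = (x + t1 *: z) + (y + t2 *: z).
    by rewrite addrACA.
  have := hq.1 (x + t1 *: z) (y + t2 *: z); rewrite mulrDl; move=> h.
  by rewrite addrC; lra.
move=> t x; rewrite le_eqVlt => /orP[/eqP <-|t0].
  rewrite scale0r mul0r; apply/eqP; rewrite eq_le; apply/andP; split.
    by have := sh_le_q 0; rewrite (sublin0 hq).
  by apply: sh_ge => s s0; have := sh_lb 0 s0; rewrite oppr0 (sublin0 hq) oppr0.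
apply/eqP; rewrite eq_le; apply/andP; split.
  rewrite -ler_pdivrMl //; apply: sh_ge => s s0.
  rewrite ler_pdivrMl //; apply: le_trans (sh_le _ (mulr_ge0 (ltW t0) s0)) _.
  rewrite /shexp -scalerA -scalerDr (hq.2 _ _ (ltW t0)) mulrBr mulrA; exact: lexx.
apply: sh_ge => s s0; have ts0 : 0 <= s / t by rewrite divr_ge0 // ltW.
rewrite -ler_pdivlMl //; apply: le_trans (sh_le x ts0) _.
rewrite ler_pdivlMl // /shexp mulrBr.
have -> : t *: x + s *: z = t *: (x + (s / t) *: z).
  by rewrite scalerDr scalerA mulrCA divff ?gt_eqF // mulr1.
rewrite (hq.2 _ _ (ltW t0)).
have -> : t * (s / t * q z) = s * q z by field; rewrite gt_eqF.
exact: lexx.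
Qed.
End Shift.
End HBsec.
Section HBmain.
Variables (R : realType) (E : completeNormedModType R) (F : BanachFAlgebra R E).
Local Notation "x ⊑ y" := (Defs.le F x y) (at level 70).
Local Notation pos := (posE F).
Local Open Scope classical_set_scope.

Definition pnorm (x : E) : R := `|pos x|.
Lemma pnorm_sublin : sublin pnorm.
Proof.
split.
  move=> x y; rewrite /pnorm.
  apply: le_trans (norm_mono (pos_ge0 F _) (pos_add_le F x y)) _; exact: ler_normD.
by move=> t x t0; rewrite /pnorm pos_scale // normrZ ger0_norm.
Qed.

Lemma separate (y : E) : 0 ⊑ y -> y != 0 -> exists G, posdual F G /\ 0 < G y.
Proof.
move=> y0 yn0.
have hp := pnorm_sublin.
pose py := shift pnorm y.
have hpy : sublin py := sh_sublin y hp.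
have py_le x : py x <= pnorm x := @sh_le_q _ _ pnorm y hp x.
have pyy : py (- y) <= - `|y|.
  have := @sh_one _ _ pnorm y hp (-y); rewrite addNr (sublin0 hp) sub0r.
  by rewrite /pnorm pos_id.
have sw : forall a b c : R, a - c <= b -> a - b <= c by move=> a b c h; lra.
pose T := {q : E -> R | sublin q /\ forall x, q x <= py x}.
pose Rl := fun (a b : T) => `[< forall x, sval b x <= sval a x >].
pose t0 : T := exist _ py (conj hpy (fun x => lexx _)).
have [m mmax] : exists m : T, premaximal Rl m.
  apply: (ZL_preorder t0).
  - by move=> a; apply/asboolP => x; exact: lexx.
  - move=> a b c /asboolP hab /asboolP hbc; apply/asboolP => x.
    exact: le_trans (hbc x) (hab x).
  - move=> A Atot.
    have [[s0 As0]|Ae] := pselect (exists s, A s); last first.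
      by exists t0 => s As; exfalso; apply: Ae; exists s.
    pose qi := fun x => inf ((fun s : T => sval s x) @` A).
    have lbA x (s : T) : A s -> - py (- x) <= sval s x.
      move=> As; apply: le_trans (sublin_lb x (proj1 (svalP s))).
      by rewrite lerN2; exact: (proj2 (svalP s)).
    have qi_le x (s : T) : A s -> qi x <= sval s x.
      move=> As; apply: (@inf_img_le _ _ A (fun s : T => sval s x) (- py (- x)) s) => //.
      by move=> s' As'; exact: lbA.
    have qi_ge x c : (forall s : T, A s -> c <= sval s x) -> c <= qi x.
      by move=> h; apply: inf_img_ge => //; exists s0.
    have hqi : sublin qi.
      split.
        move=> x z; rewrite -lerBlDr; apply: (qi_ge) => s1 As1.
        apply: (sw); apply: (qi_ge) => s2 As2; rewrite lerBlDr.
        have h1 := proj1 (proj1 (svalP s1)); have h2 := proj1 (proj1 (svalP s2)).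
        case: (Atot s1 s2 As1 As2) => /asboolP h.
          apply: le_trans (qi_le _ _ As2) _; apply: le_trans (h2 x z) _.
          by have := h x; lra.
        apply: le_trans (qi_le _ _ As1) _; apply: le_trans (h1 x z) _.
        by have := h z; lra.
      move=> t x; rewrite le_eqVlt => /orP[/eqP <-|tp].
        rewrite scale0r mul0r; apply/eqP; rewrite eq_le; apply/andP; split.
          by apply: le_trans (qi_le _ _ As0) _; rewrite (sublin0 (proj1 (svalP s0))).
        by apply: (qi_ge) => s As; rewrite (sublin0 (proj1 (svalP s))).
      apply/eqP; rewrite eq_le; apply/andP; split.
        rewrite -ler_pdivrMl //; apply: (qi_ge) => s As.
        rewrite ler_pdivrMl // -(proj2 (proj1 (svalP s)) _ _ (ltW tp)).
        exact: qi_le.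
      apply: (qi_ge) => s As; rewrite (proj2 (proj1 (svalP s)) _ _ (ltW tp)).
      by rewrite ler_pM2l //; exact: qi_le.
    have qi_py x : qi x <= py x.
      exact: le_trans (qi_le x s0 As0) (proj2 (svalP s0) x).
    exists (exist _ qi (conj hqi qi_py)) => s As; apply/asboolP => x /=.
    exact: qi_le.
pose mf := sval m.
have hm : sublin mf := proj1 (svalP m).
have mpy x : mf x <= py x := proj2 (svalP m) x.
have madd x z : mf (x + z) = mf x + mf z.
  have hsz := sh_sublin z hm.
  pose u : T := exist _ (shift mf z)
    (conj hsz (fun x => le_trans (@sh_le_q _ _ mf z hm x) (mpy x))).
  have /asboolP hu : Rl u m.
    by apply: mmax; apply/asboolP => v /=; exact: (@sh_le_q _ _ mf z hm v).
  have h1 := hu x; have h2 := @sh_one _ _ mf z hm x.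
  have h3 := hm.1 x z; move: h1; rewrite -/mf => h1.
  apply/eqP; rewrite eq_le h3 /=; lra.
have m0 : mf 0 = 0 := sublin0 hm.
have mN x : mf (- x) = - mf x.
  by have := madd x (-x); rewrite subrr m0 => h; lra.
have lin (a : R) x z : mf (a *: x + z) = a * mf x + mf z.
  rewrite madd; congr (_ + _).
  have [a0|a0] := leP 0 a; first exact: hm.2.
  have -> : a *: x = - ((- a) *: x) by rewrite scaleNr opprK.
  by rewrite mN hm.2 ?mulNr ?opprK // oppr_ge0 ltW.
have bd x : `|mf x| <= 1 * `|x|.
  rewrite mul1r ler_norml; apply/andP; split.
    rewrite lerNl -mN; apply: le_trans (mpy _) _; apply: le_trans (py_le _) _.
    by rewrite -normrN; exact: norm_pos_le.
  apply: le_trans (mpy _) _; apply: le_trans (py_le _) _; exact: norm_pos_le.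
exists mf; split.
  split; first by split; [exact: lin|exact: lin_bdd_cont lin bd].
  move=> x x0; have := le_trans (mpy (-x)) (py_le (-x)).
  rewrite /pnorm /posE join_r ?normr0; last exact: lopp_le0 x0.
  by rewrite mN oppr_le0.
have := mpy (-y); rewrite mN => h.
have : 0 < `|y| by rewrite normr_gt0.
move: (le_trans h pyy) => h'; lra.
Qed.
End HBmain.
Section OrdCont.
Variables (R : realType) (E : completeNormedModType R) (F : BanachFAlgebra R E).
Local Notation "x ⊑ y" := (Defs.le F x y) (at level 70).
Local Notation jn := (Defs.join F).
Local Notation mt := (Defs.meet F).
Local Notation mul := (Defs.mul F).
Ltac lat := first [exact: jubl|exact: jubr|exact: mlbl|exact: mlbr|exact: lrefl].

Lemma ord_cont (A : Type) (r : A -> A -> Prop) (x : A -> E) (u : E) :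
  directed r -> decr_to0 F r x -> 0 ⊑ u ->
  forall z, 0 ⊑ z -> (forall a, z ⊑ mul (x a) u) -> z = 0.
Proof.
move=> [[a0] _] [_ [x0 xinf]] u0 z z0 hz.
pose c := x a0.
have c0 : 0 ⊑ c := x0 a0.
have Tc0 : 0 ⊑ mul c u := mul_ge0' c0 u0.
apply: (@Defs.archimedean _ _ F z (mul c u) z0) => n.
case: n => [|n]; first by rewrite scale0r.
set k : R := n.+1%:R.
have k0 : 0 < k by rewrite ltr0Sn.
pose w := posE F (k *: z - mul c u).
have w0 : 0 ⊑ w := pos_ge0 F _.
have hwc : forall a, mt w c ⊑ k *: x a.
  move=> a; set ya := k *: x a; set ma := mt ya c.
  have ya0 : 0 ⊑ ya by apply: lscale0 => //; exact: ltW.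
  have ma0 : 0 ⊑ ma := meet_ge0 ya0 c0.
  pose qa := ya - ma; pose pa := c - ma.
  have qa0 : 0 ⊑ qa by apply: lsub0; lat.
  have Tqa0 : 0 ⊑ mul qa u := mul_ge0' qa0 u0.
  have dqp : mt qa pa = 0 by rewrite /qa /pa -meet_add subrr.
  have [dT _] := Defs.f_prop (z := u) dqp u0.
  have hkz : k *: z ⊑ mul c u + mul qa u.
    apply: ltr (_ : k *: z ⊑ mul ya u) _.
      by rewrite /ya Defs.mulZl; apply: lscale; [exact: ltW|exact: hz].
    have -> : ya = ma + qa by rewrite /qa addrC subrK.
    rewrite Defs.mulDl; apply: ladd; apply: mul_mono => //; lat.
  have wq : w ⊑ mul qa u.
    apply: jlub => //; apply: lsub0'; apply: lsub0.
    have := ladd (- mul c u) hkz; by rewrite addrAC subrr add0r.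
  have wp : mt w pa ⊑ 0 by rewrite -dT; apply: meet_mono => //; lat.
  have -> : c = pa + ma by rewrite /pa subrK.
  apply: ltr (meet_le_add w pa ma0) _.
  apply: ltr (ladd ma wp) _; rewrite add0r /ma; lat.
have wc : mt w c = 0.
  apply: lanti; last exact: meet_ge0 w0 c0.
  have h : k^-1 *: mt w c ⊑ 0.
    have ki : 0 <= k^-1 by rewrite invr_ge0 ltW.
    apply: xinf => a; have := lscale ki (hwc a).
    by rewrite scalerA mulVf ?gt_eqF // scale1r.
  have := lscale (ltW k0) h; by rewrite scalerA divff ?gt_eqF // scale1r scaler0.
have hcw : mt c w = 0 by rewrite meetC.
have [dc _] := Defs.f_prop hcw u0.
have dkc : mt w (k *: mul c u) = 0.
  have dc' : mt w (mul c u) = 0 by rewrite meetC.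
  exact: (disj_scale w0 Tc0 dc' (ltW k0)).
have wk : w ⊑ k *: mul c u.
  apply: jlub; last by apply: lscale0 => //; exact: ltW.
  apply: ltr (_ : _ ⊑ k *: z) _.
    by have := laddl (k *: z) (lopp_le0 Tc0); rewrite addr0.
  by apply: lscale; [exact: ltW|exact: hz].
have w_0 : w = 0 by rewrite -(meet_l wk) dkc.
have := pos_ge F (k *: z - mul c u); rewrite -/w w_0 => h.
by have := ladd (mul c u) h; rewrite subrK add0r.
Qed.
End OrdCont.
Section Main.
Variables (R : realType) (E : completeNormedModType R) (F : BanachFAlgebra R E).
Local Notation "x ⊑ y" := (Defs.le F x y) (at level 70).
Local Notation jn := (Defs.join F).
Local Notation mt := (Defs.meet F).
Local Notation mul := (Defs.mul F).
Ltac lat := first [exact: jubl|exact: jubr|exact: mlbl|exact: mlbr|exact: lrefl].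

Lemma posdual_mono G v w : posdual F G -> v ⊑ w -> G v <= G w.
Proof. by move=> [hG hp] /lsub0 h; rewrite -subr_ge0 -dualB //; exact: hp. Qed.
Lemma mul_abs_ge0 v u : 0 ⊑ u -> 0 ⊑ mul (absE F v) u.
Proof. by move=> u0; apply: mul_ge0' => //; exact: abs_ge0. Qed.

Lemma cont_decr : mw_continuous F -> decr_mw_cvg0 F.
Proof.
move=> h A r dr x hx; apply: (h _ _ dr x).
exists A, r, x; split => //; split => // b; exists b => a rba.
rewrite subr0 abs_id; [exact: hx.1 b a rba|exact: hx.2.1 a].
Qed.

Lemma decr_cont : decr_mw_cvg0 F -> mw_continuous F.
Proof.
move=> h A r dr x [B [s [y [ds [hy hb]]]]] u u0.
have hy0 := h B s ds y hy u u0.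
apply: (@weak0 _ _ F) => G hG eps e0.
have [b0 hb0] := (@weak0_inv _ _ F _ _ _ _ _) hy0 hG e0.
have [a0 ha0] := hb b0.
exists a0 => a ra.
rewrite abs_id; last exact: mul_abs_ge0.
apply: le_lt_trans (hb0 b0 (ds.2.1 b0)).
apply: posdual_mono => //; apply: mul_mono => //.
by rewrite (subr0 (y b0)) (abs_id (hy.2.1 b0)); exact: ha0 a ra.
Qed.

Lemma decr_incr : decr_mw_cvg0 F -> incr_bdd_mw_cauchy F.
Proof.
move=> h A r dr x xs x0 xinc xbd.
have [[a0] [rrefl [rtrans rup]]] := dr.
pose B := (A * {y : E | forall a, x a ⊑ y})%type.
pose s : B -> B -> Prop := fun p q => r p.1 q.1 /\ sval q.2 ⊑ sval p.2.
pose w : B -> E := fun p => sval p.2 - x p.1.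
have ds : directed s.
  split; first exact: (inhabits (a0, exist _ xs xbd)).
  split; first by move=> p; split => //; exact: lrefl.
  split; first by move=> p q t [h1 h2] [h3 h4]; split; [exact: rtrans h1 h3|exact: ltr h4 h2].
  move=> p q; have [c [rc1 rc2]] := rup p.1 q.1.
  have ub : forall a, x a ⊑ mt (sval p.2) (sval q.2).
    by move=> a; apply: mglb; [exact: (svalP p.2) | exact: (svalP q.2)].
  by exists (c, exist _ _ ub); split; split => //=; lat.
have hw : decr_to0 F s w.
  split; first by move=> p q [h1 h2]; apply: ladd2 => //; apply: lopp; exact: xinc.
  split; first by move=> p; apply: lsub0; exact: (svalP p.2).
  move=> z hz.
  have key : forall n : nat, forall a, x a ⊑ xs - n%:R *: z.
    elim=> [|n IH] a; first by rewrite scale0r subr0.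
    have := hz (a, exist _ _ IH); rewrite /w /= => h1.
    have e1 : z + (x a - z) = x a by rewrite addrC subrK.
    have e2 : xs - n%:R *: z - x a + (x a - z) = xs - n.+1%:R *: z.
      by rewrite addrA subrK -natr1 scalerDl scale1r opprD addrA.
    by have := ladd (x a - z) h1; rewrite e1 e2.
  have hn : forall n : nat, n%:R *: posE F z ⊑ xs.
    move=> n; rewrite -pos_scale //.
    have h1 : n%:R *: z ⊑ xs.
      have := ladd (n%:R *: z - x a0) (key n a0).
      have e1 : x a0 + (n%:R *: z - x a0) = n%:R *: z by rewrite addrC subrK.
      have e2 : xs - n%:R *: z + (n%:R *: z - x a0) = xs - x a0 by rewrite addrA subrK.
      rewrite e1 e2 => h2.
      apply: ltr h2 _; have := laddl xs (lopp_le0 (x0 a0)); by rewrite addr0.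
    rewrite -(pos_id (ltr (x0 a0) (xbd a0))); exact: pos_mono.
  have := Defs.archimedean (pos_ge0 F z) hn => pz.
  by rewrite -pz; exact: pos_ge.
have hc := h B s ds w hw.
move=> u u0; apply: (@weak0 _ _ F) => G hG eps e0.
have [p0 hp0] := (@weak0_inv _ _ F _ _ _ _ _) (hc u u0) hG e0.
exists (p0.1, p0.1) => -[a a'] [ra ra'].
rewrite abs_id; last exact: mul_abs_ge0.
apply: le_lt_trans (hp0 p0 (ds.2.1 p0)).
apply: posdual_mono => //; apply: mul_mono => //.
rewrite !subr0 (abs_id (_ : 0 ⊑ w p0)); last by apply: lsub0; exact: (svalP p0.2).
apply: jlub.
  apply: ladd2; first exact: (svalP p0.2).
  by apply: lopp; exact: xinc.
rewrite opprB; apply: ladd2; first exact: (svalP p0.2).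
by apply: lopp; exact: xinc.
Qed.
End Main.
Section Main2.
Variables (R : realType) (E : completeNormedModType R) (F : BanachFAlgebra R E).
Local Notation "x ⊑ y" := (Defs.le F x y) (at level 70).
Local Notation jn := (Defs.join F).
Local Notation mt := (Defs.meet F).
Local Notation mul := (Defs.mul F).
Local Notation pos := (posE F).
Ltac lat := first [exact: jubl|exact: jubr|exact: mlbl|exact: mlbr|exact: lrefl].

Lemma incr_decr : mw_complete F -> incr_bdd_mw_cauchy F -> decr_mw_cvg0 F.
Proof.
move=> hc h A r dr x hx u u0.
have [[a1] [rrefl [rtrans rup]]] := dr.
have x0 := hx.2.1; have xdec := hx.1.
pose v a := x a1 - mt (x a) (x a1).
have hv : mw_cauchy F r v.
  apply: (h _ _ dr v (x a1)).
  - by move=> a; apply: lsub0; lat.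
  - move=> a b rab; apply: laddl; apply: lopp; apply: meet_mono; last exact: lrefl.
    exact: xdec a b rab.
  - move=> a; have := laddl (x a1) (lopp_le0 (meet_ge0 (x0 a) (x0 a1))).
    by rewrite addr0.
have [l hl] := hc A r dr v hv.
pose m := x a1 - l.
have dE : forall b, r a1 b -> v b - l = m - x b.
  move=> b rb; rewrite /v /m meet_l; last exact: xdec a1 b rb.
  by rewrite addrAC.
have hl' := hl u u0.
have st1 : forall b, r a1 b -> mul (pos (m - x b)) u = 0.
  move=> b rb; set y := mul (pos (m - x b)) u.
  have y0 : 0 ⊑ y by apply: mul_ge0' => //; exact: pos_ge0.
  apply/eqP; apply/negPn/negP => yn0.
  have [G [hG Gy]] := separate y0 yn0.
  have [c0 hc0] := @weak0_inv _ _ F _ _ _ _ _ hl' hG Gy.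
  have [c [rbc rc0c]] := rup b c0.
  have := hc0 c rc0c; apply/negP; rewrite -leNgt.
  apply: (@posdual_mono _ _ F) => //; apply: mul_mono => //.
  rewrite dE; last exact: rtrans rb rbc.
  apply: ltr (pos_le_abs F _); apply: pos_mono; apply: laddl; apply: lopp.
  exact: xdec b c rbc.
have st2 : mul (pos m) u = 0.
  apply: (ord_cont dr hx u0); first by apply: mul_ge0' => //; exact: pos_ge0.
  move=> a; have [b [rab r1b]] := rup a a1.
  apply: ltr (_ : _ ⊑ mul (x b) u) _; last by apply: mul_mono => //; exact: xdec a b rab.
  rewrite -(addr0 (mul (x b) u)) -(st1 b r1b) addrC -Defs.mulDl.
  apply: mul_mono => //; apply: jlub.
    have := ladd (x b) (pos_ge F (m - x b)); by rewrite subrK.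
  by apply: lpos_add; [exact: pos_ge0|exact: x0].
apply: (@weak0 _ _ F) => G hG eps e0.
have [c0 hc0] := @weak0_inv _ _ F _ _ _ _ _ hl' hG e0.
have [a0 [rc0 r10]] := rup c0 a1.
exists a0 => a ra.
rewrite abs_id; last exact: mul_abs_ge0.
apply: le_lt_trans (hc0 a (rtrans _ _ _ rc0 ra)).
apply: (@posdual_mono _ _ F) => //.
rewrite !subr0 (abs_id (x0 a)).
have hxa : x a ⊑ absE F (v a - l) + pos m.
  rewrite dE; last exact: rtrans r10 ra.
  rewrite -absN opprB.
  by have := ladd2 (abs_ge F (x a - m)) (pos_ge F m); rewrite subrK.
apply: ltr (mul_mono hxa u0) _; rewrite Defs.mulDl st2 addr0; exact: lrefl.
Qed.
End Main2.

Theorem theorem2p17 (R : realType) (E : completeNormedModType R)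
    (F : BanachFAlgebra R E) :
  mw_complete F ->
  (mw_continuous F <-> incr_bdd_mw_cauchy F) /\
  (incr_bdd_mw_cauchy F <-> decr_mw_cvg0 F).
Proof.
move=> hc; split; split.
- by move=> h1; apply: decr_incr; exact: cont_decr.
- by move=> h2; apply: decr_cont; exact: incr_decr hc h2.
- exact: incr_decr hc.
- exact: decr_incr.
Qed.
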